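(* For $0\le i\le n$, $dp(h,i)$ is strictly increasing (in lexicographic order) for $0\le h\le i$.
   Context: Let $x_0\le x_1\le\cdots\le x_{n+1}$ be real numbers, $\{x\}=x-\lfloor x\rfloor$, and let $\pi=(\pi_0,\dots,\pi_{n+1})$ be the permutation of $\{0,\dots,n+1\}$ such that for $0\le i<j\le n+1$, $\pi_i>\pi_j$ iff $(\{x_i\},-x_i,i)<(\{x_j\},-x_j,j)$ lexicographically. For a sequence of indices $s_0<\cdots<s_k$, a drop is a consecutive pair $(s_{h-1},s_h)$ with $\pi_{s_{h-1}}>\pi_{s_h}$. For $0\le h\le i\le n$, $dp(h,i)$ is the pair $(d(h,i),p(h,i))$, where $d(h,i)$ is the minimum number of drops over all sequences of $h+1$ indices $0=s_0<s_1<\cdots<s_h\le i$, and $p(h,i)$ is the minimum of $\pi_{s_h}$ over all such sequences having exactly $d(h,i)$ drops. Pairs are compared lexicographically. *)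

(* Defs.v *)
From mathcomp Require Import all_boot all_order all_algebra all_fingroup.
Set Implicit Arguments. Unset Strict Implicit. Unset Printing Implicit Defensive.
Import Order.TTheory GRing.Theory Num.Theory.

(* Indices 0..n+1 are 'I_n.+2; x : 'I_n.+2 -> R; pi : 'S_n.+2 (values read as nat). *)

Local Open Scope ring_scope.
Definition frac {R : archiRealFieldType} (x : R) : R := x - (Num.floor x)%:~R.

(* strict lexicographic order on triples ({x_i}, -x_i, i) *)
Definition key_lt {R : archiRealFieldType} {N : nat} (x : 'I_N -> R) (i j : 'I_N) : bool :=
  (frac (x i) < frac (x j)) ||
  ((frac (x i) == frac (x j)) &&
   ((- x i < - x j) || ((- x i == - x j) && (i < j)%N))).
Local Close Scope ring_scope.

Section DP.
Variables (n : nat) (pi : 'S_n.+2).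

Definition idx_seq (h : nat) := {ffun 'I_h.+1 -> 'I_n.+2}.

Definition admissible (h i : nat) (s : idx_seq h) : bool :=
  [&& (s ord0 : nat) == 0,
      [forall k : 'I_h, (s (inord k) < s (inord k.+1))%N] &
      (s ord_max <= i)%N].

Definition drops (h : nat) (s : idx_seq h) : nat :=
  \sum_(k < h) (pi (s (inord k)) > pi (s (inord k.+1)))%N.

(* d(h,i): minimum number of drops over admissible sequences.
   (The default h.+1 of the min is never reached: drops <= h and, for h <= i,
   admissible sequences exist.) *)
Definition dval (h i : nat) : nat :=
  \big[minn/h.+1]_(s : idx_seq h | admissible i s) drops s.

(* p(h,i): minimum of pi_{s_h} over admissible sequences with exactly d(h,i)
   drops.  (Default n.+2 is never reached since all values of pi are < n+2.) *)
Definition pval (h i : nat) : nat :=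
  \big[minn/n.+2]_(s : idx_seq h | admissible i s && (drops s == dval h i))
     (pi (s ord_max) : nat).

Definition dp (h i : nat) : nat * nat := (dval h i, pval h i).
End DP.

Definition lex_lt (a b : nat * nat) : bool :=
  (a.1 < b.1)%N || ((a.1 == b.1) && (a.2 < b.2)%N).

(* Main.v *)
Require Import Defs.
From mathcomp Require Import all_boot all_order all_algebra all_fingroup.
From mathcomp Require Import zify.
Import Order.TTheory GRing.Theory Num.Theory.

Lemma bigmin_seq_le (I : eqType) (r : seq I) (F : I -> nat) d j :
  j \in r -> (\big[minn/d]_(i <- r) F i <= F j)%N.
Proof.
elim: r => // a r IH; rewrite inE big_cons => /orP[/eqP -> | jr].
  exact: geq_minl.
exact: leq_trans (geq_minr _ _) (IH jr).
Qed.

Lemma bigmin_le (I : finType) (P : pred I) (F : I -> nat) d j :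
  P j -> (\big[minn/d]_(i | P i) F i <= F j)%N.
Proof.
move=> Pj; rewrite -big_filter; apply: bigmin_seq_le.
by rewrite mem_filter Pj mem_index_enum.
Qed.

Section Aux.
Set Implicit Arguments. Unset Strict Implicit.
Variables (n : nat) (pi : 'S_n.+2).

Lemma adm_lt h i (s : idx_seq n h) : admissible i s ->
  forall k, (k < h)%N -> (s (inord k) < s (inord k.+1))%N.
Proof.
case/and3P=> _ /forallP H _ k kh.
by have := H (Ordinal kh).
Qed.

Lemma drops_le h (s : idx_seq n h) : (drops pi s <= h)%N.
Proof.
rewrite /drops.
rewrite -[X in (_ <= X)%N]card_ord -sum1_card.
by apply: leq_sum => k _; apply: leq_b1.
Qed.

Lemma adm_exists h i : (h <= i)%N -> (i <= n.+1)%N ->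
  exists s : idx_seq n h, admissible i s.
Proof.
move=> hi in1.
exists [ffun k : 'I_h.+1 => inord k].
apply/and3P; split.
- by rewrite ffunE inordK.
- apply/forallP=> k; rewrite !ffunE.
  have k1 : (k < h.+1)%N by apply: leq_trans (ltn_ord k) _.
  have k2 : (k.+1 < h.+1)%N by rewrite ltnS.
  rewrite (inordK k1) (inordK k2) !inordK //; lia.
- rewrite ffunE /= inordK //; lia.
Qed.

Lemma dval_le h i (s : idx_seq n h) : admissible i s -> (dval pi h i <= drops pi s)%N.
Proof. by move=> a; exact: bigmin_le. Qed.

Lemma pval_le h i (s : idx_seq n h) : admissible i s -> drops pi s = dval pi h i ->
  (Defs.pval pi h i <= pi (s ord_max))%N.
Proof.
by move=> a d; rewrite /Defs.pval; apply: bigmin_le; rewrite a d eqxx.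
Qed.

Lemma dval_att h i : (h <= i)%N -> (i <= n.+1)%N ->
  exists2 s : idx_seq n h, admissible i s & drops pi s = dval pi h i.
Proof.
move=> hi in1.
have [s0 a0] := adm_exists hi in1.
have : dval pi h i = h.+1 \/
   exists2 s : idx_seq n h, admissible i s & drops pi s = dval pi h i.
  rewrite /dval; apply: (big_ind (fun v => v = h.+1 \/
     exists2 s : idx_seq n h, admissible i s & drops pi s = v)).
  - by left.
  - move=> a b Ha Hb; case: (leqP a b) => ab.
    + by [].
    + by [].
  - by move=> s a; right; exists s.
case=> // E.
have := dval_le a0; rewrite E => H.
by have := drops_le s0; lia.
Qed.

Lemma pval_att h i : (h <= i)%N -> (i <= n.+1)%N ->
  exists s : idx_seq n h, [/\ admissible i s, drops pi s = dval pi h i &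
     (pi (s ord_max) : nat) = Defs.pval pi h i].
Proof.
move=> hi in1.
have [s0 a0 d0] := dval_att hi in1.
have : Defs.pval pi h i = n.+2 \/
   exists s : idx_seq n h, [/\ admissible i s, drops pi s = dval pi h i &
     (pi (s ord_max) : nat) = Defs.pval pi h i].
  rewrite /Defs.pval; apply: (big_ind (fun v => v = n.+2 \/
     exists s : idx_seq n h, [/\ admissible i s, drops pi s = dval pi h i &
     (pi (s ord_max) : nat) = v])).
  - by left.
  - move=> a b Ha Hb; case: (leqP a b) => ab.
    + by [].
    + by [].
  - by move=> s /andP[a /eqP d]; right; exists s.
case=> // E.
have := pval_le a0 d0; rewrite E => H.
by have := ltn_ord (pi (s0 ord_max)); lia.
Qed.

Lemma step h i : (h.+1 <= i)%N -> (i <= n.+1)%N ->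
  lex_lt (dp pi h i) (dp pi h.+1 i).
Proof.
move=> hi in1.
have [s [a d p]] := pval_att hi in1.
pose t : idx_seq n h := [ffun k : 'I_h.+1 => s (inord k)].
have tE k : (k <= h)%N -> t (inord k) = s (inord k).
  by move=> kh; rewrite ffunE inordK.
have adt : admissible i t.
  case/and3P: (a) => s0 _ sm.
  apply/and3P; split.
  - by rewrite ffunE /=; have -> : (inord 0 : 'I_h.+2) = ord0 by apply: val_inj; rewrite /= inordK.
  - apply/forallP=> k; rewrite !tE //; last by apply: ltnW.
    exact: adm_lt a _ (leq_trans (ltn_ord k) (leqnSn _)).
  - rewrite ffunE /=.
    apply: leq_trans sm.
    have -> : (ord_max : 'I_h.+2) = inord h.+1 by apply: val_inj; rewrite /= inordK.
    exact: ltnW (adm_lt a (ltnSn h)).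
have dE : drops pi s = drops pi t +
   (pi (s (inord h)) > pi (s (inord h.+1)))%N.
  rewrite /drops big_ord_recr /=; congr (_ + _).
  apply: eq_bigr => k _; rewrite !tE //; last by apply: ltnW.
have Hd := dval_le adt.
rewrite /lex_lt /dp /=.
have Hlt := adm_lt a (ltnSn h).
have Hne : s (inord h) != s (inord h.+1).
  by apply/eqP=> e; move: Hlt; rewrite e ltnn.
have Hne' : (pi (s (inord h)) : nat) != pi (s (inord h.+1)).
  by apply: contra Hne => /eqP /val_inj /perm_inj ->.
case Hb : (pi (s (inord h.+1)) < pi (s (inord h)))%N in dE.
  have Hle : (dval pi h i < dval pi h.+1 i)%N.
    by rewrite -d dE addn1 ltnS.
  by rewrite Hle.
rewrite addn0 in dE.
have Hle : (dval pi h i <= dval pi h.+1 i)%N by rewrite -d dE.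
case: (ltngtP (dval pi h i) (dval pi h.+1 i)) => //= [gt|E].
  by move: Hle; rewrite leqNgt gt.
have hb : (pi (s (inord h)) < pi (s (inord h.+1)))%N.
  by rewrite ltn_neqAle Hne' leqNgt Hb.
have Hp := pval_le adt (esym (etrans E (etrans (esym d) dE))).
rewrite ffunE in Hp.
rewrite -p.
have -> : (ord_max : 'I_h.+2) = inord h.+1 by apply: val_inj; rewrite /= inordK.
exact: leq_ltn_trans Hp hb.
Qed.

End Aux.

Lemma lex_trans a b c : lex_lt a b -> lex_lt b c -> lex_lt a c.
Proof.
case: a b c => [a1 a2] [b1 b2] [c1 c2]; rewrite /lex_lt /=.
case/orP=> [H|/andP[/eqP H H']]; case/orP=> [G|/andP[/eqP G G']];
  apply/orP; subst => //; first by left; lia.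
- by left; lia.
- by left; lia.
- by right; rewrite eqxx /=; lia.
Qed.

Theorem lemma6 (R : archiRealFieldType) (n : nat) (x : 'I_n.+2 -> R)
    (pi : 'S_n.+2)
    (hx : forall i j : 'I_n.+2, (i <= j)%N -> (x i <= x j)%R)
    (hpi : forall i j : 'I_n.+2, (i < j)%N ->
             (pi i > pi j)%N = key_lt x i j) :
  forall i h h' : nat, (i <= n)%N -> (h < h')%N -> (h' <= i)%N ->
    lex_lt (dp pi h i) (dp pi h' i).
Proof.
move=> i h h' iN; elim: h' => // h' IH.
rewrite ltnS leq_eqVlt => /orP[/eqP -> |hh] hi.
  by apply: step => //; apply: leq_trans iN _.
apply: lex_trans (IH hh (ltnW hi)) _.
by apply: step => //; apply: leq_trans iN _.
Qed.
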